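(* Let $K$ be a field, $\nu$ a valuation on $K[x]$, and $Q,Q'$ key polynomials for $\nu$ with $\epsilon(Q)\le\epsilon(Q')$. Then for every $f\in K[x]$, if $\nu_Q(f)=\nu(f)$ then $\nu_{Q'}(f)=\nu(f)$.
   Context: $\nu:K[x]\to\Gamma\cup\{\infty\}$ is a valuation ($\Gamma$ an ordered abelian group) with $\nu(f)=\infty$ only for $f=0$; $\Gamma'=\Gamma\otimes\mathbb{Q}$. For $k\in\mathbb{N}$, $\partial_kf=\frac{1}{k!}\frac{d^kf}{dx^k}$. For nonconstant $f$, $\epsilon(f)=\max\{(\nu(f)-\nu(\partial_kf))/k\mid 1\le k\le\deg f,\ \partial_kf\ne0\}\in\Gamma'$. A key polynomial is a monic nonconstant $Q\in K[x]$ such that every nonconstant $f\in K[x]$ with $\epsilon(f)\ge\epsilon(Q)$ satisfies $\deg f\ge\deg Q$. For monic nonconstant $Q$, the $Q$-expansion of $f$ is the unique expression $f=f_0+f_1Q+\dots+f_nQ^n$ with each $f_i=0$ or $\deg f_i<\deg Q$, and $\nu_Q(f)=\min_i\nu(f_iQ^i)$ (the $Q$-truncation of $\nu$). *)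

(* Defs.v *)
From mathcomp Require Import all_boot all_order all_algebra.
Set Implicit Arguments. Unset Strict Implicit. Unset Printing Implicit Defensive.
Import GRing.Theory.
Local Open Scope ring_scope.

Record is_oag (G : zmodType) (le : rel G) : Prop := {
  oag_refl : forall a, le a a;
  oag_antisym : forall a b, le a b -> le b a -> a = b;
  oag_trans : forall a b c, le a b -> le b c -> le a c;
  oag_total : forall a b, le a b || le b a;
  oag_add : forall a b c, le a b -> le (a + c) (b + c) }.

(* Since nu(f) = oo exactly for f = 0, we
   represent nu by its (G-valued) restriction to nonzero polynomials; the value
   nu 0 is irrelevant (see nuext, which sends 0 to None = oo). *)
Record is_valuation (K : fieldType) (G : zmodType) (le : rel G)
    (nu : {poly K} -> G) : Prop := {
  val_mul : forall f g, f != 0 -> g != 0 -> nu (f * g) = nu f + nu g;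
  val_add : forall f g, f != 0 -> g != 0 -> f + g != 0 ->
     le (nu f) (nu (f + g)) || le (nu g) (nu (f + g)) }.

Section Defs.
Variables (K : fieldType) (G : zmodType) (le : rel G) (nu : {poly K} -> G).

(* nu with values in G u {oo}, None standing for oo. *)
Definition nuext (f : {poly K}) : option G := if f == 0 then None else Some (nu f).

Definition minG (a b : G) : G := if le a b then a else b.

(* Elements of Gamma' = Gamma (x) Q of the form a/k (k > 0) are represented by
   pairs (a, k); a/k <= b/j  iff  j*a <= k*b. *)
Definition frac_le (x y : G * nat) : bool := le (x.1 *+ y.2) (y.1 *+ x.2).

(* the candidates (nu f - nu (d_k f))/k, 1 <= k <= deg f, d_k f != 0,
   where d_k f = f^`N(k) is the k-th derivative divided by k! *)
Definition eps_cands (f : {poly K}) : seq (G * nat) :=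
  [seq (nu f - nu (f^`N(k)), k) | k <- iota 1 (size f).-1 & f^`N(k) != 0].

(* eps f <= eps g  (eps = max of the candidates), for nonconstant f, g. *)
Definition eps_le (f g : {poly K}) : Prop :=
  exists2 y, y \in eps_cands g & forall x, x \in eps_cands f -> frac_le x y.

Definition key_poly (Q : {poly K}) : Prop :=
  Q \is monic /\ (1 < size Q)%N /\
  forall f : {poly K}, (1 < size f)%N -> eps_le Q f -> (size Q <= size f)%N.

(* i-th coefficient of the Q-expansion f = sum_i f_i Q^i (deg f_i < deg Q) *)
Definition qcoef (Q f : {poly K}) (i : nat) : {poly K} := (f %/ Q ^+ i) %% Q.

(* the Q-truncation nu_Q(f) = min_i nu(f_i Q^i) (None = oo when f = 0) *)
Definition nuQ (Q f : {poly K}) : option G :=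
  foldr (fun g acc => Some (match acc with None => nu g | Some a => minG (nu g) a end))
    None [seq qcoef Q f i * Q ^+ i | i <- iota 0 (size f) & qcoef Q f i != 0].

End Defs.

(* Main.v *)
Require Import Defs.
From mathcomp Require Import all_boot all_order all_algebra zify.
Set Implicit Arguments. Unset Strict Implicit. Unset Printing Implicit Defensive.
Import GRing.Theory.
Local Open Scope ring_scope.


Section OG.
Variables (G : zmodType) (le : rel G) (hG : is_oag le).
Definition lt (a b : G) := ~~ le b a.

Lemma ole_refl a : le a a. Proof. exact: (oag_refl hG). Qed.
Lemma ole_trans a b c : le a b -> le b c -> le a c. Proof. exact: (oag_trans hG). Qed.
Lemma ole_total a b : le a b || le b a. Proof. exact: (oag_total hG). Qed.
Lemma oltW a b : lt a b -> le a b.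
Proof. by rewrite /lt; case/orP: (ole_total a b) => ->. Qed.
Lemma olt_irr a : ~~ lt a a. Proof. by rewrite /lt ole_refl. Qed.
Lemma oleD2r a b c : le a b -> le (a + c) (b + c). Proof. exact: (oag_add hG). Qed.
Lemma oleD2rE a b c : le (a + c) (b + c) = le a b.
Proof.
apply/idP/idP; last exact: oleD2r.
by move/(oleD2r (- c)); rewrite !addrK.
Qed.
Lemma oleD2lE a b c : le (c + a) (c + b) = le a b.
Proof. by rewrite ![c + _]addrC oleD2rE. Qed.
Lemma oltD2rE a b c : lt (a + c) (b + c) = lt a b.
Proof. by rewrite /lt oleD2rE. Qed.
Lemma oltD2lE a b c : lt (c + a) (c + b) = lt a b.
Proof. by rewrite /lt oleD2lE. Qed.
Lemma oleD a b c d : le a b -> le c d -> le (a + c) (b + d).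
Proof.
move=> h1 h2; apply: (ole_trans (oleD2r c h1)).
by rewrite oleD2lE.
Qed.
Lemma olt_le_trans a b c : lt a b -> le b c -> lt a c.
Proof. by move=> h1 h2; apply/negP => h3; move/negP: h1; apply; apply: ole_trans h2 h3. Qed.
Lemma ole_lt_trans a b c : le a b -> lt b c -> lt a c.
Proof. by move=> h1 h2; apply/negP => h3; move/negP: h2; apply; apply: ole_trans h3 h1. Qed.
Lemma oltDl a b c d : lt a b -> le c d -> lt (a + c) (b + d).
Proof.
move=> h1 h2; apply: (@olt_le_trans _ (b + c)); first by rewrite oltD2rE.
by rewrite oleD2lE.
Qed.
Lemma oltDr a b c d : le a b -> lt c d -> lt (a + c) (b + d).
Proof. by move=> h1 h2; rewrite addrC [b + _]addrC; apply: oltDl. Qed.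
Lemma olt_neq a b : lt a b -> a != b.
Proof. by move=> h; apply/eqP => e; move: h; rewrite e (negbTE (olt_irr b)). Qed.
Lemma ole_anti a b : le a b -> le b a -> a = b. Proof. exact: (oag_antisym hG). Qed.
Lemma oleMn a b n : le a b -> le (a *+ n) (b *+ n).
Proof. by move=> h; elim: n => [|n IH]; rewrite ?ole_refl // !mulrS oleD. Qed.
Lemma oltMn a b n : lt a b -> (0 < n)%N -> lt (a *+ n) (b *+ n).
Proof.
move=> h; case: n => // n _; elim: n => [|n IH]; first by rewrite !mulr1n.
by rewrite mulrS [b *+ _]mulrS; apply: oltDl => //; apply: oltW.
Qed.
Lemma oleMnE a b n : (0 < n)%N -> le (a *+ n) (b *+ n) = le a b.
Proof.
move=> n0; apply/idP/idP; last exact: oleMn.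
move=> h; apply/negPn/negP => h'.
have := oltMn h' n0; rewrite /lt h //.
Qed.
Lemma oltMnE a b n : (0 < n)%N -> lt (a *+ n) (b *+ n) = lt a b.
Proof. by move=> n0; rewrite /lt oleMnE. Qed.
Lemma oleBl a b c : le (a - c) b = le a (b + c).
Proof. by rewrite -(oleD2rE _ _ c) subrK. Qed.
Lemma oleBr a b c : le a (b - c) = le (a + c) b.
Proof. by rewrite -(oleD2rE _ _ c) subrK. Qed.
Lemma oltBl a b c : lt (a - c) b = lt a (b + c).
Proof. by rewrite /lt oleBr. Qed.
Lemma oltBr a b c : lt a (b - c) = lt (a + c) b.
Proof. by rewrite /lt oleBl. Qed.
Lemma ole_lt_or a b : le a b || lt b a.
Proof. by rewrite /lt; case: (le a b). Qed.
Lemma odouble0 (a : G) : a + a = 0 -> a = 0.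
Proof.
move=> h; case/orP: (ole_total a 0) => h1.
  apply: ole_anti => //; have : le (a + a) (a + 0) by rewrite oleD2lE.
  by rewrite h addr0.
apply: ole_anti => //; have : le (a + 0) (a + a) by rewrite oleD2lE.
by rewrite h addr0.
Qed.
End OG.


Section NU.
Variables (K : fieldType) (G : zmodType) (le : rel G) (nu : {poly K} -> G).
Hypotheses (hG : is_oag le) (hnu : is_valuation le nu).
Local Notation lt := (lt le).

Lemma nuM (f g : {poly K}) : f != 0 -> g != 0 -> nu (f * g) = nu f + nu g.
Proof. exact: (val_mul hnu). Qed.

Lemma nu1 : nu 1 = 0.
Proof.
have h := nuM (oner_neq0 _) (oner_neq0 _); rewrite mulr1 in h.
by apply: (addrI (nu 1)); rewrite addr0 -h.
Qed.

Lemma nuN1 : nu (-1) = 0.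
Proof.
have n1 : (-1 : {poly K}) != 0 by rewrite oppr_eq0 oner_neq0.
have h := nuM n1 n1; rewrite mulrNN mulr1 nu1 in h.
by apply: (odouble0 hG); rewrite -h.
Qed.

Lemma nuN (f : {poly K}) : nu (- f) = nu f.
Proof.
have [->|f0] := eqVneq f 0; first by rewrite oppr0.
have n1 : (-1 : {poly K}) != 0 by rewrite oppr_eq0 oner_neq0.
by rewrite -mulN1r nuM // nuN1 add0r.
Qed.

Definition Ge n c (h : {poly K}) := h = 0 \/ le c (nu h *+ n).
Definition Gt n c (h : {poly K}) := h = 0 \/ lt c (nu h *+ n).

Lemma Ge0 n c : Ge n c 0. Proof. by left. Qed.
Lemma Gt0 n c : Gt n c 0. Proof. by left. Qed.

Lemma GeD n c f g : Ge n c f -> Ge n c g -> Ge n c (f + g).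
Proof.
case=> [->|hf]; first by rewrite add0r.
case=> [->|hg]; first by rewrite addr0; right.
have [fg0|fg] := eqVneq (f + g) 0; first by left.
have [->|f0] := eqVneq f 0; first by rewrite add0r; right.
have [->|g0] := eqVneq g 0; first by rewrite addr0; right.
right; case/orP: (val_add hnu f0 g0 fg) => h.
  by apply: (ole_trans hG hf); apply: oleMn.
by apply: (ole_trans hG hg); apply: oleMn.
Qed.

Lemma GtD n c f g : Gt n c f -> Gt n c g -> Gt n c (f + g).
Proof.
case=> [->|hf]; first by rewrite add0r.
case=> [->|hg]; first by rewrite addr0; right.
have [fg0|fg] := eqVneq (f + g) 0; first by left.
have [->|f0] := eqVneq f 0; first by rewrite add0r; right.
have [->|g0] := eqVneq g 0; first by rewrite addr0; right.
right; case/orP: (val_add hnu f0 g0 fg) => h.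
  by apply: (olt_le_trans hG hf); apply: oleMn.
by apply: (olt_le_trans hG hg); apply: oleMn.
Qed.

Lemma GeN n c f : Ge n c f -> Ge n c (- f).
Proof. by case=> [->|h]; [left; rewrite oppr0 | right; rewrite nuN]. Qed.
Lemma GtN n c f : Gt n c f -> Gt n c (- f).
Proof. by case=> [->|h]; [left; rewrite oppr0 | right; rewrite nuN]. Qed.

Lemma Ge_sum n c m (F : 'I_m -> {poly K}) :
  (forall i, Ge n c (F i)) -> Ge n c (\sum_(i < m) F i).
Proof.
move=> h; apply: (big_ind (Ge n c)) => //; [exact: Ge0 | exact: GeD].
Qed.
Lemma Gt_sum n c m (F : 'I_m -> {poly K}) :
  (forall i, Gt n c (F i)) -> Gt n c (\sum_(i < m) F i).
Proof.
move=> h; apply: (big_ind (Gt n c)) => //; [exact: Gt0 | exact: GtD].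
Qed.

Lemma Ge_mono n c d h : le c d -> Ge n d h -> Ge n c h.
Proof. by move=> cd [->|h1]; [left | right; exact: (ole_trans hG cd h1)]. Qed.
Lemma Gt_mono n c d h : le c d -> Gt n d h -> Gt n c h.
Proof. by move=> cd [->|h1]; [left | right; exact: (ole_lt_trans hG cd h1)]. Qed.
Lemma GeGt n c d h : lt c d -> Ge n d h -> Gt n c h.
Proof. by move=> cd [->|h1]; [left | right; exact: (olt_le_trans hG cd h1)]. Qed.

Lemma exact_val n c x y : x != 0 -> nu x *+ n = c -> Gt n c y ->
  x + y != 0 /\ nu (x + y) *+ n = c.
Proof.
move=> x0 hx [->|hy]; first by rewrite addr0.
have [y0|y0] := eqVneq y 0; first by rewrite y0 addr0.
have xy0 : x + y != 0.
  apply/eqP => e; have : y = - x by apply/eqP; rewrite -subr_eq0 opprK addrC e.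
  by move=> ey; move: hy; rewrite ey nuN hx (negbTE (olt_irr hG c)).
split => //; apply: (ole_anti hG).
  have ny0 : - y != 0 by rewrite oppr_eq0.
  have e : (x + y) + - y = x by rewrite addrK.
  have := val_add hnu xy0 ny0; rewrite e x0 => /(_ isT) /orP [h|h].
    by rewrite -hx; apply: oleMn.
  by move: hy; rewrite /lt -hx -(nuN y) (oleMn hG n h).
case/orP: (val_add hnu x0 y0 xy0) => h.
  by rewrite -hx; apply: oleMn.
exact: (oltW hG (olt_le_trans hG hy (oleMn hG n h))).
Qed.

Lemma exists_small m (F : 'I_m -> {poly K}) :
  \sum_(i < m) F i != 0 ->
  exists i, F i != 0 /\ le (nu (F i)) (nu (\sum_(i < m) F i)).
Proof.
move=> f0; case: (boolP [exists i, (F i != 0) && le (nu (F i)) (nu (\sum_(i < m) F i))]).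
  by case/existsP => i /andP [h1 h2]; exists i.
rewrite negb_exists => /forallP h.
have : Gt 1 (nu (\sum_(i < m) F i)) (\sum_(i < m) F i).
  apply: Gt_sum => i; have := h i; rewrite negb_and negbK.
  by case/orP => [/eqP ->|h']; [left | right; rewrite mulr1n].
by case=> [/eqP|]; [rewrite (negbTE f0) | rewrite mulr1n (negbTE (olt_irr hG _))].
Qed.
End NU.


Section Leib.
Variable K : fieldType.

Definition Tay (p : {poly K}) : {poly {poly K}} :=
  (map_poly polyC (map_poly polyC p)).['X%:P + 'X].

Lemma TayE p : Tay p = \poly_(i < size p) p^`N(i).
Proof.
rewrite /Tay nderiv_taylor; last exact: mulrC.
rewrite !size_map_polyC poly_def; apply: eq_bigr => i _.
rewrite !nderivn_map -mul_polyC; congr (_ * _).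
by rewrite horner_map /= -/(comp_poly _ _) comp_polyXr.
Qed.

Lemma coef_Tay p i : (Tay p)`_i = p^`N(i).
Proof.
rewrite TayE coef_poly; case: ltnP => // h.
by rewrite nderivn_poly0.
Qed.

Lemma TayM p q : Tay (p * q) = Tay p * Tay q.
Proof. by rewrite /Tay !rmorphM hornerM. Qed.

Lemma nderivnM (p q : {poly K}) k :
  (p * q : {poly K})^`N(k) = \sum_(j < k.+1) p^`N(j) * q^`N(k - j).
Proof.
by rewrite -coef_Tay TayM coefM; apply: eq_bigr => j _; rewrite !coef_Tay.
Qed.
End Leib.


Section FR.
Variables (G : zmodType) (le : rel G) (hG : is_oag le).

Lemma frac_le_refl x : frac_le le x x.
Proof. exact: ole_refl. Qed.

Lemma frac_le_total x y : frac_le le x y || frac_le le y x.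
Proof. exact: ole_total. Qed.

Lemma frac_le_trans x y z : (0 < y.2)%N ->
  frac_le le x y -> frac_le le y z -> frac_le le x z.
Proof.
rewrite /frac_le => y0 h1 h2.
rewrite -(oleMnE hG _ _ y0) -!mulrnA.
have h1' := oleMn hG z.2 h1; have h2' := oleMn hG x.2 h2.
rewrite -!mulrnA in h1' h2'.
apply: ole_trans hG _ _ _ (_ : le _ (y.1 *+ (x.2 * z.2)%N)) _.
  by rewrite mulnC.
by rewrite mulnC [(x.2 * _)%N]mulnC.
Qed.

Lemma frac_max (s : seq (G * nat)) : s != [::] -> all (fun x => 0 < x.2)%N s ->
  exists2 y, y \in s & forall x, x \in s -> frac_le le x y.
Proof.
elim: s => // a s IH _ /= /andP [a0 hs].
have [-> | sn] := eqVneq s [::].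
  by exists a; rewrite ?mem_seq1 // => x; rewrite mem_seq1 => /eqP ->; apply: frac_le_refl.
have [y ys hy] := IH sn hs.
case/orP: (frac_le_total a y) => hay.
  exists y; first by rewrite in_cons ys orbT.
  by move=> x; rewrite in_cons => /orP [/eqP -> //|]; apply: hy.
exists a; first by rewrite in_cons eqxx.
move=> x; rewrite in_cons => /orP [/eqP ->|xs]; first exact: frac_le_refl.
apply: frac_le_trans (hy x xs) hay.
by move/allP: hs => /(_ y ys).
Qed.
End FR.

Lemma subGE (G : zmodType) (a x b y : G) : a - x + (b - y) = a + b - (x + y).
Proof. by rewrite opprD addrACA. Qed.

Section KP.
Variables (K : fieldType) (G : zmodType) (le : rel G) (nu : {poly K} -> G).
Hypotheses (hG : is_oag le) (hnu : is_valuation le nu).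
Local Notation lt := (lt le).
Local Notation Ge := (Ge le nu).
Local Notation Gt := (Gt le nu).
Local Notation nuM := (nuM hnu).
Local Notation nuN := (nuN hG hnu).
Local Notation GeD := (GeD hG hnu).
Local Notation GtD := (GtD hG hnu).
Local Notation GeN := (GeN hG hnu).
Local Notation GtN := (GtN hG hnu).
Local Notation Ge_sum := (Ge_sum hG hnu).
Local Notation Gt_sum := (Gt_sum hG hnu).
Local Notation exact_val := (exact_val hG hnu).
Local Notation exists_small := (exists_small hG hnu).
Local Notation Ge_mono := (Ge_mono hG).
Local Notation Gt_mono := (Gt_mono hG).
Local Notation GeGt := (GeGt hG).

Lemma cands_pos f x : x \in eps_cands nu f -> (0 < x.2)%N.
Proof.
rewrite /eps_cands => /mapP [k]; rewrite mem_filter mem_iota => /andP [_ /andP [k1 _]] -> //.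
Qed.

Lemma cands_mem f k : (0 < k)%N -> f^`N(k) != 0 ->
  (nu f - nu f^`N(k), k) \in eps_cands nu f.
Proof.
move=> k0 fk; rewrite /eps_cands; apply: map_f; rewrite mem_filter fk mem_iota /=.
rewrite k0 /=; case: (ltnP k (size f)) => hk; first by move: hk; case: (size f).
by move: fk; rewrite nderivn_poly0 ?eqxx.
Qed.

Lemma lead_nderivn (f : {poly K}) : (1 < size f)%N -> f^`N((size f).-1) != 0.
Proof.
move=> hf; apply/eqP => e; have := congr1 (fun p : {poly K} => p`_0) e.
rewrite coef_nderivn addn0 binn mulr1n coef0 => /eqP.
rewrite -lead_coefE lead_coef_eq0 => /eqP f0.
by move: hf; rewrite f0 size_poly0.
Qed.

Variable P : {poly K}.
Hypothesis hP : key_poly le nu P.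

Lemma P_size : (1 < size P)%N. Proof. by case: hP => _ []. Qed.
Lemma P_neq0 : P != 0.
Proof. by apply/eqP => e; have := P_size; rewrite e size_poly0. Qed.

Lemma P_max : exists A b, [/\ (0 < b)%N, P^`N(b) != 0, A = nu P - nu P^`N(b) &
  forall x, x \in eps_cands nu P -> frac_le le x (A, b)].
Proof.
have hn : eps_cands nu P != [::].
  have k0 : (0 < (size P).-1)%N by have := P_size; case: (size P) => // [[]].
  by have := cands_mem k0 (lead_nderivn P_size); case: (eps_cands nu P).
have [y ys hy] := frac_max hG hn (introT allP (@cands_pos P)).
move: (ys); rewrite /eps_cands => /mapP [k]; rewrite mem_filter mem_iota => /andP [pk /andP [k1 _]] ey.
by exists y.1, y.2; rewrite ey /=; split => //; rewrite -ey.
Qed.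

Section WithMax.
Variables (A : G) (b : nat).
Hypotheses (b0 : (0 < b)%N) (Pb : P^`N(b) != 0) (hA : A = nu P - nu P^`N(b))
  (hmax : forall x, x \in eps_cands nu P -> frac_le le x (A, b)).

Lemma P_Ge k : Ge b (nu P *+ b - A *+ k) (P^`N(k)).
Proof.
case: k => [|k]; first by right; rewrite nderivn0 mulr0n subr0 ole_refl.
have [->|pk] := eqVneq (P^`N(k.+1)) 0; first by left.
right; have := hmax (cands_mem (ltn0Sn k) pk); rewrite /frac_le /= mulrnBl.
by rewrite !(oleBl hG) [A *+ _ + _]addrC.
Qed.

Lemma small_Gt (h : {poly K}) k : (size h < size P)%N -> (0 < k)%N ->
  Gt b (nu h *+ b - A *+ k) (h^`N(k)).
Proof.
move=> hs k0; have [->|hk] := eqVneq (h^`N(k)) 0; first by left.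
right; apply/negP => H.
have ksz : (k < size h)%N.
  by case: (ltnP k (size h)) => // /nderivn_poly0 e; move: hk; rewrite e eqxx.
case: hP => _ [_ hkey].
have : (size P <= size h)%N.
  apply: hkey; first by lia.
  exists (nu h - nu h^`N(k), k); first exact: cands_mem.
  move=> x xc; apply: (frac_le_trans hG (y:=(A,b)) b0 (hmax xc)).
  by rewrite /frac_le /= mulrnBl (oleBr hG) addrC -(oleBr hG).
by rewrite leqNgt hs.
Qed.

Lemma small_Ge (h : {poly K}) k : (size h < size P)%N -> Ge b (nu h *+ b - A *+ k) (h^`N(k)).
Proof.
move=> hs; case: k => [|k]; first by right; rewrite nderivn0 mulr0n subr0 ole_refl.
by case: (small_Gt (k:=k.+1) hs isT) => [->|h1]; [left | right; apply: oltW].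
Qed.

Lemma Ge_Gt_mul c1 c2 (f g : {poly K}) : Ge b c1 f -> Gt b c2 g -> Gt b (c1 + c2) (f * g).
Proof.
case=> [->|h1]; first by rewrite mul0r; left.
case=> [->|h2]; first by rewrite mulr0; left.
have [->|f0] := eqVneq f 0; first by rewrite mul0r; left.
have [->|g0] := eqVneq g 0; first by rewrite mulr0; left.
by right; rewrite nuM // mulrnDl; apply: oltDr.
Qed.

Lemma Gt_Ge_mul c1 c2 (f g : {poly K}) : Gt b c1 f -> Ge b c2 g -> Gt b (c1 + c2) (f * g).
Proof. by move=> h1 h2; rewrite mulrC addrC; apply: Ge_Gt_mul. Qed.

Lemma split_c (u v : {poly K}) j : u != 0 -> v != 0 -> (j <= b)%N ->
  nu (u * v) *+ b - A *+ b = (nu u *+ b - A *+ j) + (nu v *+ b - A *+ (b - j)).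
Proof. by move=> u0 v0 hj; rewrite subGE -mulrnDr subnKC // nuM // mulrnDl. Qed.

Lemma deriv_prod_Gt (u v : {poly K}) : u != 0 -> v != 0 ->
  (size u < size P)%N -> (size v < size P)%N ->
  Gt b (nu (u * v) *+ b - A *+ b) ((u * v)^`N(b)).
Proof.
move=> u0 v0 us vs; rewrite nderivnM; apply: Gt_sum => j.
have hj : (j <= b)%N by rewrite -ltnS.
rewrite (split_c u0 v0 hj).
have [j0|j0] := eqVneq (nat_of_ord j) 0%N.
  apply: Ge_Gt_mul; first exact: small_Ge.
  by apply: small_Gt => //; rewrite j0 subn0.
apply: Gt_Ge_mul; last exact: small_Ge.
by apply: small_Gt => //; rewrite lt0n.
Qed.

Lemma divkey (u v : {poly K}) : u != 0 -> v != 0 ->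
  (size u < size P)%N -> (size v < size P)%N ->
  [/\ (u * v) %% P != 0, nu ((u * v) %% P) = nu (u * v),
      (size ((u * v) %/ P)%R < size P)%N &
      ((u * v) %/ P = 0 \/ lt (nu (u * v)) (nu ((u * v) %/ P * P)))].
Proof.
move=> u0 v0 us vs.
set q := (u * v) %/ P; set r := (u * v) %% P.
have uv0 : u * v != 0 by rewrite mulf_neq0.
have P0 := P_neq0.
have e : u * v = q * P + r by rewrite /q /r -divp_eq.
have qs : (size q < size P)%N.
  rewrite /q size_divp // size_mul //; move: us vs P_size.
  move: (size u) (size v) (size P) => n1 n2 n3; lia.
have rs : (size r < size P)%N by rewrite /r ltn_modp.
have qlt : q = 0 \/ lt (nu (u * v)) (nu (q * P)).
  have [q0|q0] := eqVneq q 0; first by left.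
  right; apply/negP => H.
  have qP0 : q * P != 0 by rewrite mulf_neq0.
  set c := nu (q * P) *+ b - A *+ b.
  have [x0 hx] : q * P^`N(b) + \sum_(j < b) q^`N(j.+1) * P^`N(b - j.+1) != 0 /\
      nu (q * P^`N(b) + \sum_(j < b) q^`N(j.+1) * P^`N(b - j.+1)) *+ b = c.
    apply: exact_val => //; first by rewrite mulf_neq0.
      rewrite nuM // mulrnDl /c nuM // mulrnDl hA mulrnBl.
      by rewrite -addrA opprB [nu P *+ b + _]addrC subrK.
    apply: Gt_sum => j.
    have hj : (j.+1 <= b)%N by [].
    have -> : c = (nu q *+ b - A *+ j.+1) + (nu P *+ b - A *+ (b - j.+1)).
      by rewrite /c subGE -mulrnDr subnKC // nuM // mulrnDl.
    apply: Gt_Ge_mul; last exact: P_Ge.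
    exact: small_Gt.
  have ed : (q * P)^`N(b) = (u * v)^`N(b) - r^`N(b).
    by rewrite e nderivnD addrK.
  have eqs : (q * P)^`N(b) = q * P^`N(b) + \sum_(j < b) q^`N(j.+1) * P^`N(b - j.+1).
    by rewrite nderivnM big_ord_recl nderivn0 subn0.
  move: hx x0; rewrite -eqs ed => hx x0.
  have h1 : Gt b c ((u * v)^`N(b)).
    apply: Gt_mono (deriv_prod_Gt u0 v0 us vs).
    by rewrite /c (oleD2rE hG) (oleMnE hG _ _ b0).
  have h2 : Gt b c (r^`N(b)).
    have [r0|r0] := eqVneq r 0; first by rewrite r0 nderivnC /=; case: b b0 => //; left.
    apply: Gt_mono (small_Gt rs b0).
    rewrite /c (oleD2rE hG) (oleMnE hG _ _ b0).
    have er : r = u * v + - (q * P) by rewrite e addrAC subrr add0r.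
    have nqP : - (q * P) != 0 by rewrite oppr_eq0.
    have := val_add hnu uv0 nqP; rewrite -er r0 => /(_ isT) /orP [h|h].
      exact: (ole_trans hG H h).
    by rewrite -(nuN (q * P)).
  case: (GtD h1 (GtN h2)) => [e0|]; first by move: x0; rewrite e0 eqxx.
  by rewrite hx (negbTE (olt_irr hG c)).
split => //.
- case: qlt => [q0|hq]; first by move: e; rewrite q0 mul0r add0r => <-.
  have er : r = u * v + - (q * P) by rewrite e addrAC subrr add0r.
  have [] := exact_val (n:=1) uv0 (_ : nu (u * v) *+ 1 = nu (u * v)) (_ : Gt 1 (nu (u * v)) (- (q * P))) => //.
    by right; rewrite nuN // mulr1n.
  by rewrite -er.
- case: qlt => [q0|hq]; first by move: e; rewrite q0 mul0r add0r => <-.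
  have er : r = u * v + - (q * P) by rewrite e addrAC subrr add0r.
  have [] := exact_val (n:=1) uv0 (_ : nu (u * v) *+ 1 = nu (u * v)) (_ : Gt 1 (nu (u * v)) (- (q * P))) => //.
    by right; rewrite nuN // mulr1n.
  by rewrite -er mulr1n.
Qed.

End WithMax.
End KP.


Section EXP.
Variables (K : fieldType) (P : {poly K}).
Hypothesis (Ps : (1 < size P)%N).

Lemma Pn0 : P != 0.
Proof. by apply/eqP => e; move: Ps; rewrite e size_poly0. Qed.

Lemma Pexpn0 n : P ^+ n != 0.
Proof. by rewrite expf_neq0 // Pn0. Qed.

Lemma size_Pexp n : size (P ^+ n) = ((size P).-1 * n).+1.
Proof.
rewrite -size_exp prednK // lt0n size_poly_eq0; exact: Pexpn0.
Qed.

Lemma qcoefD f g i : qcoef P (f + g) i = qcoef P f i + qcoef P g i.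
Proof. by rewrite /qcoef divpD modpD. Qed.

Lemma qcoef0 i : qcoef P 0 i = 0.
Proof. by rewrite /qcoef div0p mod0p. Qed.

Lemma qcoef_small f i : (size (qcoef P f i) < size P)%N.
Proof. by rewrite /qcoef ltn_modp Pn0. Qed.

Lemma qcoef_mono (a : {poly K}) n i : (size a < size P)%N ->
  qcoef P (a * P ^+ n) i = if i == n then a else 0.
Proof.
move=> as_; rewrite /qcoef.
case: (ltngtP i n) => hin.
- have e : a * P ^+ n = (a * P ^+ (n - i).-1 * P) * P ^+ i.
    by rewrite -[a * _ * P]mulrA -exprSr prednK ?subn_gt0 // -mulrA -exprD subnK // ltnW.
  by rewrite e mulpK ?Pexpn0 // modp_mull.
- have [->|a0] := eqVneq a 0; first by rewrite mul0r div0p mod0p.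
  rewrite divp_small ?mod0p //.
  rewrite size_mul ?Pexpn0 // !size_Pexp.
  move: as_ hin Ps; move: (size a) (size P) => n1 n2 h1 h2 h3; nia.
- by rewrite hin mulpK ?Pexpn0 // modp_small.
Qed.

Lemma qcoefS f i : qcoef P f i.+1 = qcoef P (f %/ P) i.
Proof. by rewrite /qcoef exprS divp_divl. Qed.

Lemma qexp n (f : {poly K}) : (size f <= n)%N -> f = \sum_(i < n) qcoef P f i * P ^+ i.
Proof.
elim: n f => [|n IH] f hf.
  by rewrite big_ord0; apply/eqP; rewrite -size_poly_leq0.
rewrite big_ord_recl expr0 mulr1 /qcoef expr0 divp1 -/(qcoef _ _ _).
have hs : (size (f %/ P)%R <= n)%N.
  rewrite size_divp ?Pn0 //; move: hf Ps; move: (size f) (size P) => n1 n2; lia.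
have := IH _ hs => e.
rewrite {1}(divp_eq f P) addrC; congr (_ + _).
rewrite {1}e big_distrl /=; apply: eq_bigr => i _.
by rewrite /bump /= add1n -/(qcoef P f _) qcoefS exprSr mulrA.
Qed.

Lemma qcoef_big (f : {poly K}) i : (size f <= i)%N -> qcoef P f i = 0.
Proof.
move=> h; rewrite /qcoef divp_small ?mod0p //.
rewrite size_Pexp; move: h Ps; move: (size f) (size P) => n1 n2; nia.
Qed.

End EXP.


Section MAIN.
Variables (K : fieldType) (G : zmodType) (le : rel G) (nu : {poly K} -> G).
Hypotheses (hG : is_oag le) (hnu : is_valuation le nu).
Local Notation lt := (lt le).
Local Notation Ge := (Ge le nu).
Local Notation Gt := (Gt le nu).
Local Notation nuM := (nuM hnu).
Local Notation nuN := (nuN hG hnu).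
Local Notation GeD := (GeD hG hnu).
Local Notation Ge_sum := (Ge_sum hG hnu).
Local Notation Ge_mono := (Ge_mono hG).

Definition NuGe (P : {poly K}) c f := forall i, Ge 1 c (qcoef P f i * P ^+ i).

Lemma Ge1_le c x : Ge 1 c x -> x != 0 -> le c (nu x).
Proof. by case=> [->|h]; [rewrite eqxx | rewrite mulr1n in h]. Qed.

Section P.
Variable P : {poly K}.
Hypothesis Ps : (1 < size P)%N.

Lemma NuGe0 c : NuGe P c 0.
Proof. by move=> i; rewrite qcoef0 mul0r; left. Qed.

Lemma NuGe_D c f g : NuGe P c f -> NuGe P c g -> NuGe P c (f + g).
Proof. by move=> h1 h2 i; rewrite qcoefD mulrDl; apply: GeD. Qed.

Lemma NuGe_sum c m (F : 'I_m -> {poly K}) :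
  (forall i, NuGe P c (F i)) -> NuGe P c (\sum_(i < m) F i).
Proof.
move=> h; apply: (big_ind (NuGe P c)) => //; [exact: NuGe0 | exact: NuGe_D].
Qed.

Lemma NuGe_mono c d f : le c d -> NuGe P d f -> NuGe P c f.
Proof. by move=> cd h i; apply: Ge_mono cd (h i). Qed.

Lemma NuGe_mon (a : {poly K}) n : (size a < size P)%N -> NuGe P (nu (a * P ^+ n)) (a * P ^+ n).
Proof.
move=> as_ i; rewrite (qcoef_mono Ps _ _ as_).
case: (eqVneq i n) => [->|_]; last by rewrite mul0r; left.
by right; rewrite mulr1n; apply: ole_refl.
Qed.
End P.

Section Key.
Variable P : {poly K}.
Hypothesis hP : key_poly le nu P.

Lemma NuGe_mul c d f g : NuGe P c f -> NuGe P d g -> NuGe P (c + d) (f * g).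
Proof.
have Ps := P_size hP.
have [A [b [b0 Pb hA hmax]]] := P_max hG hP.
move=> hf hg.
have ef := qexp Ps (leqnn (size f)); have eg := qexp Ps (leqnn (size g)).
rewrite ef eg big_distrl /=; apply: NuGe_sum => i; rewrite big_distrr /=.
apply: NuGe_sum => j.
set a := qcoef P f i; set a' := qcoef P g j.
have [a0|a0] := eqVneq a 0; first by rewrite a0 !mul0r; apply: NuGe0.
have [a'0|a'0] := eqVneq a' 0; first by rewrite a'0 mul0r mulr0; apply: NuGe0.
have as_ : (size a < size P)%N by apply: qcoef_small.
have a's : (size a' < size P)%N by apply: qcoef_small.
have Pn := Pexpn0 Ps.
have [r0 hr qs hq] := divkey hG hnu hP b0 Pb hA hmax a0 a'0 as_ a's.
set q := (a * a') %/ P in qs hq; set r := (a * a') %% P in r0 hr.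
have rs : (size r < size P)%N by rewrite /r ltn_modp (Pn0 Ps).
have hc : le (c + d) (nu (a * a' * P ^+ (i + j))).
  have e : a * a' * P ^+ (i + j) = a * P ^+ i * (a' * P ^+ j).
    by rewrite exprD mulrACA.
  rewrite e nuM ?mulf_neq0 //; apply: oleD => //.
    by apply: Ge1_le (hf i) _; rewrite mulf_neq0.
  by apply: Ge1_le (hg j) _; rewrite mulf_neq0.
have e : a * P ^+ i * (a' * P ^+ j) = r * P ^+ (i + j) + q * P ^+ (i + j).+1.
  rewrite mulrACA -exprD {1}(divp_eq (a * a') P) -/q -/r mulrDl addrC.
  by rewrite exprS mulrA.
rewrite e; apply: NuGe_D.
  apply: NuGe_mono (NuGe_mon Ps _ rs) => //.
  by rewrite nuM // hr -nuM ?mulf_neq0.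
have [q0|q0] := eqVneq q 0; first by rewrite q0 mul0r; apply: NuGe0.
apply: NuGe_mono (NuGe_mon Ps _ qs).
apply: (ole_trans hG hc).
case: hq => [/eqP|hq]; first by rewrite (negbTE q0).
have -> : nu (q * P ^+ (i + j).+1) = nu (q * P) + nu (P ^+ (i + j)).
  by rewrite exprS mulrA nuM // mulf_neq0 // (Pn0 Ps).
have -> : nu (a * a' * P ^+ (i + j)) = nu (a * a') + nu (P ^+ (i + j)).
  by rewrite nuM // mulf_neq0.
by apply: (oltW hG); rewrite (oltD2rE hG).
Qed.
End Key.
End MAIN.


Section FIN.
Variables (K : fieldType) (G : zmodType) (le : rel G) (nu : {poly K} -> G).
Hypotheses (hG : is_oag le) (hnu : is_valuation le nu).
Local Notation lt := (lt le).
Local Notation Ge := (Ge le nu).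
Local Notation Gt := (Gt le nu).
Local Notation NuGe := (NuGe le nu).
Local Notation nuM := (nuM hnu).
Local Notation nuN := (nuN hG hnu).
Local Notation GeD := (GeD hG hnu).
Local Notation GtD := (GtD hG hnu).
Local Notation GtN := (GtN hG hnu).
Local Notation exact_val := (exact_val hG hnu).
Local Notation exists_small := (exists_small hG hnu).
Local Notation Ge_mono := (Ge_mono hG).
Local Notation GeGt := (GeGt hG).
Local Notation NuGe_mon := (NuGe_mon nu hG).
Local Notation NuGe_mul := (NuGe_mul hG hnu).
Local Notation NuGe_mono := (NuGe_mono hG).
Local Notation NuGe_D := (NuGe_D hG hnu).
Local Notation NuGe0 := (NuGe0 le nu).
Local Notation NuGe_sum := (NuGe_sum hG hnu).

Definition mf (s : seq {poly K}) : option G :=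
  foldr (fun g acc => Some (match acc with None => nu g | Some a => minG le (nu g) a end))
    None s.

Lemma minG_l a b : le (minG le a b) a.
Proof. by rewrite /minG; case: ifP => h; [apply: ole_refl | have := ole_total hG a b; rewrite h]. Qed.
Lemma minG_r a b : le (minG le a b) b.
Proof. by rewrite /minG; case: ifP => h; [ | apply: ole_refl]. Qed.
Lemma minG_or a b : minG le a b = a \/ minG le a b = b.
Proof. by rewrite /minG; case: ifP; [left | right]. Qed.

Lemma mf_nil s : mf s = None -> s = [::].
Proof. by case: s. Qed.

Lemma mf_le s m : mf s = Some m -> forall x, x \in s -> le m (nu x).
Proof.
elim: s m => // y s IH m /=.
case e: (mf s) => [a|] /= [<-] x; rewrite in_cons => /orP [/eqP ->|xs].
- exact: minG_l.
- exact: (ole_trans hG (minG_r _ _) (IH _ e _ xs)).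
- exact: ole_refl.
- by move: xs; rewrite (mf_nil e).
Qed.

Lemma mf_att s m : mf s = Some m -> exists2 x, x \in s & m = nu x.
Proof.
elim: s m => // y s IH m /=.
case e: (mf s) => [a|] /= [<-].
- case: (minG_or (nu y) a) => ->; first by exists y; rewrite ?in_cons ?eqxx.
  by have [x xs ->] := IH _ e; exists x; rewrite // in_cons xs orbT.
- by exists y; rewrite ?in_cons ?eqxx.
Qed.

Lemma nuX (Q : {poly K}) n : Q != 0 -> nu (Q ^+ n) = nu Q *+ n.
Proof.
move=> Q0; elim: n => [|n IH]; first by rewrite expr0 (nu1 hnu).
by rewrite exprS nuM ?expf_neq0 // IH mulrS.
Qed.

Lemma size_monic_sub (p q : {poly K}) : p \is monic -> q \is monic ->
  size p = size q -> (0 < size q)%N -> (size (p - q)%R < size q)%N.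
Proof.
move=> pm qm e q0.
have : (size (p - q)%R <= (size q).-1)%N.
  apply/leq_sizeP => j hj; rewrite coefB.
  case: (ltngtP j (size q).-1) => hj'.
  - by move: hj; rewrite leqNgt hj'.
  - have hq : (size q <= j)%N by move: hj' q0; case: (size q).
    by rewrite !nth_default ?subrr ?e.
  - have lp : p`_j = 1 by move/monicP: pm; rewrite lead_coefE e -hj'.
    have lq : q`_j = 1 by move/monicP: qm; rewrite lead_coefE -hj'.
    by rewrite lp lq subrr.
by move: q0; case: (size q) => //= n _ h; rewrite ltnS.
Qed.

Lemma NuGe_pow (P Q : {poly K}) (hP : key_poly le nu P) n :
  NuGe P (nu Q) Q -> NuGe P (nu Q *+ n) (Q ^+ n).
Proof.
move=> h; have Ps := P_size hP.
elim: n => [|n IH].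
  have := NuGe_mon Ps (a:=1) 0; rewrite expr0 mulr1 (nu1 hnu) mulr0n.
  by apply; rewrite size_poly1.
by rewrite exprS mulrS; apply: NuGe_mul.
Qed.

Lemma QinQ' (Q Q' : {poly K}) (hQ : key_poly le nu Q) (hQ' : key_poly le nu Q')
  (heps : eps_le le nu Q Q') : NuGe Q' (nu Q) Q.
Proof.
have Ps' := P_size hQ'; have Ps := P_size hQ.
have hsz : (size Q <= size Q')%N by case: hQ => _ [_ hk]; apply: hk.
case: (ltngtP (size Q) (size Q')) => hlt.
- by have := NuGe_mon Ps' (a:=Q) 0 hlt; rewrite expr0 mulr1.
- by move: hsz; rewrite leqNgt hlt.
set h := Q - Q'.
have hs : (size h < size Q')%N.
  by apply: size_monic_sub => //; [case: hQ | case: hQ' | lia].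
have Q'0 : Q' != 0 by apply: P_neq0 hQ'.
have hh : h != 0 -> le (nu Q) (nu h).
  move=> h0; apply/negP => /negP H.
  have Hl : lt (nu h) (nu Q) by [].
  have f1 : - h != 0 by rewrite oppr_eq0.
  have f2 : nu (- h) *+ 1 = nu h by rewrite nuN mulr1n.
  have f3 : Gt 1 (nu h) Q by right; rewrite mulr1n.
  have [x0 hx] := exact_val f1 f2 f3.
  have eQ' : - h + Q = Q' by rewrite /h opprB subrK.
  rewrite eQ' mulr1n in hx.
  have [A [b [b0 Pb hA hmax]]] := P_max hG hQ.
  case: heps => y ys hy.
  have Ac : (A, b) \in eps_cands nu Q by rewrite hA; apply: cands_mem.
  have := hy _ Ac.
  move: ys; rewrite /eps_cands => /mapP [k]; rewrite mem_filter mem_iota => /andP [pk /andP [k1 _]] -> {y hy}.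
  have hsQ : (size h < size Q)%N by rewrite hlt.
  have Gk : Gt b (nu h *+ b - A *+ k) (Q'^`N(k)).
    have -> : Q' = Q - h by rewrite /h opprB addrC subrK.
    rewrite nderivnB; apply: GtD.
      apply: GeGt (P_Ge hG hmax k).
      by rewrite (oltD2rE hG) (oltMnE hG _ _ b0).
    by apply: GtN; apply: (small_Gt hG hQ b0 Pb hmax hsQ k1).
  case: Gk => [/eqP|Gk]; first by rewrite (negbTE pk).
  rewrite /frac_le /= mulrnBl (oleBr hG) => H2.
  move: Gk; rewrite -hx (oltBl hG) addrC => Gk.
  by have := olt_le_trans hG Gk H2; rewrite (negbTE (olt_irr hG _)).
have hQQ' : le (nu Q) (nu Q').
  have [h0|h0] := eqVneq h 0.
    have -> : Q' = Q by apply/eqP; rewrite eq_sym -subr_eq0 -/h h0.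
    exact: ole_refl.
  have e : Q + - h = Q' by rewrite /h opprB addrC subrK.
  have nh0 : - h != 0 by rewrite oppr_eq0.
  have := val_add hnu (P_neq0 hQ) nh0; rewrite e Q'0 => /(_ isT) /orP [//|H].
  by apply: (ole_trans hG (hh h0)); rewrite -(nuN h).
have eQ : Q = 1 * Q' ^+ 1 + h * Q' ^+ 0 by rewrite mul1r expr1 expr0 mulr1 addrC /h subrK.
rewrite [X in NuGe _ _ X]eQ; apply: NuGe_D.
  apply: NuGe_mono (NuGe_mon Ps' _ _) => //; last by rewrite size_poly1.
  by rewrite mul1r expr1.
have [h0|h0] := eqVneq h 0; first by rewrite h0 mul0r; apply: NuGe0.
apply: NuGe_mono (NuGe_mon Ps' _ hs) => //.
by rewrite expr0 mulr1; apply: hh.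
Qed.

End FIN.

Unset Implicit Arguments.
Theorem corollary4p8 (K : fieldType) (G : zmodType) (le : rel G)
  (nu : {poly K} -> G) (hG : is_oag le) (hnu : is_valuation le nu)
  (Q Q' : {poly K}) (hQ : key_poly le nu Q) (hQ' : key_poly le nu Q')
  (heps : eps_le le nu Q Q') (f : {poly K}) :
  nuQ le nu Q f = nuext nu f -> nuQ le nu Q' f = nuext nu f.
Proof.
move=> H.
have [->|f0] := eqVneq f 0; first by rewrite /nuQ /nuext size_poly0 eqxx.
have ext : nuext nu f = Some (nu f) by rewrite /nuext (negbTE f0).
rewrite ext in H *.
have Ps := P_size hQ; have Ps' := P_size hQ'.
have hsz : (size Q <= size Q')%N by case: hQ => _ [_ hk]; apply: hk.
have hyp : forall i, (i < size f)%N -> qcoef Q f i != 0 ->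
    le (nu f) (nu (qcoef Q f i * Q ^+ i)).
  move=> i hi hq; apply: (mf_le hG H); apply: map_f.
  by rewrite mem_filter hq mem_iota.
have hN : NuGe le nu Q' (nu f) f.
  have ef := qexp Ps (leqnn (size f)).
  rewrite [X in NuGe _ _ _ _ X]ef; apply: (NuGe_sum hG hnu) => i.
  set a := qcoef Q f i.
  have [a0|a0] := eqVneq a 0; first by rewrite a0 mul0r; apply: NuGe0.
  have as_ : (size a < size Q')%N by apply: leq_trans hsz; apply: qcoef_small.
  have hm := NuGe_mul hG hnu hQ' (NuGe_mon nu hG Ps' (a:=a) 0 as_)
     (NuGe_pow hG hnu hQ' i (QinQ' hG hnu hQ hQ' heps)).
  rewrite expr0 mulr1 in hm; apply: (NuGe_mono hG _ hm).
  rewrite -(nuX hnu _ (P_neq0 hQ)) -(nuM hnu) ?expf_neq0 ?(P_neq0 hQ) //.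
  exact: hyp.
rewrite /nuQ -/(mf le nu _).
set L := [seq _ | i <- _ & _].
have ef' := qexp Ps' (leqnn (size f)).
have := exists_small hG hnu (F := fun i : 'I_(size f) => qcoef Q' f i * Q' ^+ i).
rewrite -ef' => /(_ f0) [i [t0 ht]].
have tL : qcoef Q' f i * Q' ^+ i \in L.
  apply: map_f; rewrite mem_filter mem_iota /= ltn_ord andbT.
  by apply/eqP => e; move: t0; rewrite e mul0r eqxx.
case e : (mf le nu L) => [m|]; last by move: tL; rewrite (mf_nil e).
congr Some; apply: (ole_anti hG).
  exact: (ole_trans hG (mf_le hG e tL) ht).
have [x xL ->] := mf_att e.
move: xL => /mapP [j]; rewrite mem_filter => /andP [qj _] ->.
apply: Ge1_le (hN j) _.
by rewrite mulf_neq0 ?expf_neq0 ?(P_neq0 hQ').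
Qed.
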